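(* Let $p$ be a prime, $G$ a finite abelian $p$-group, and $\varphi\colon A\to B$ an isomorphism between subgroups of $G$. Let $r\ge 1$ be an integer such that for every integer $s>r$ and every $g\in G$: $g\in H(G,\varphi)$ if and only if $\varphi^i(g)$ is defined for $i=0,\dots,s-1$. Fix an integer $s>r$. For $i\in\mathbb{Z}/s\mathbb{Z}$ let $G_i=G\times\{i\}$, $A_i=A\times\{i\}$, $B_i=B\times\{i\}$, and let $K=G_0*_{A_0=B_1}G_1*_{A_1=B_2}\cdots*_{A_{s-2}=B_{s-1}}G_{s-1}$, where $A_i=B_{i+1}$ identifies $a\times i$ with $\varphi(a)\times(i+1)$. Let $G'=H_1(K;\mathbb{Z})$; each natural map $G_j\to G'$ is injective, and we regard $A':=A_{s-1}$ and $B':=B_0$ as subgroups of $G'$. Let $\varphi'\colon A'\to B'$ be the isomorphism $\varphi'(a\times(s-1))=\varphi(a)\times 0$. Then: (1) $H(G',\varphi')=A'\cap B'$. (2) The isomorphism $\Psi\colon G\to G_0\le G'$, $\Psi(g)=g\times 0$, restricts to an isomorphism $H(G,\varphi)\to H(G',\varphi')$, and $\Psi\circ\varphi^s=\varphi'\circ\Psi$ on $H(G,\varphi)$.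
   Context: For a group $Q$ and an isomorphism $\psi\colon A''\to B''$ between subgroups of $Q$, the core $H(Q,\psi)$ is $\bigcap_k H_k$ where $H_0=A''\cap B''$ and $H_{k+1}=\psi^{-1}(H_k)\cap H_k\cap\psi(H_k)$ (with $\psi^{-1}(H_k)=\{a\in A'':\psi(a)\in H_k\}$); $\psi$ restricts to an automorphism of $H(Q,\psi)$. ''$\varphi^i(g)$ is defined'' means $g$ lies in the domain of the $i$-fold composite of $\varphi$ regarded as a partial map $G\to G$. *)

(* Defs.v *)
From HB Require Import structures.
From mathcomp Require Import all_boot all_fingroup all_solvable.
Set Implicit Arguments. Unset Strict Implicit. Unset Printing Implicit Defensive.
Local Open Scope group_scope.

Section Core.
Variable T : finGroupType.

Fixpoint coreH (A B : {set T}) (psi : T -> T) (k : nat) : {set T} :=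
  match k with
  | 0 => A :&: B
  | k.+1 => let Hk := coreH A B psi k in
            [set a in A | psi a \in Hk] :&: Hk :&: (psi @: Hk)
  end.

Definition in_core (A B : {set T}) (psi : T -> T) (x : T) : Prop :=
  forall k, x \in coreH A B psi k.

(* "psi^i(g) is defined" for psi regarded as a partial map with domain A *)
Fixpoint iter_defined (A : {set T}) (psi : T -> T) (i : nat) (g : T) : bool :=
  match i with
  | 0 => true
  | i.+1 => (g \in A) && iter_defined A psi i (psi g)
  end.
End Core.

Section Construction.
Variables (gT : finGroupType) (s : nat).

(* the direct product of s copies of gT, indexed by Z/sZ = 'I_s *)
Definition powT := {dffun forall i : 'I_s, gT}.

Definition delta (j : nat) (g : gT) : powT :=
  [ffun i : 'I_s => if val i == j then g else 1].

Variables (A : {set gT}) (phi : gT -> gT).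

Definition amal_rels : {set powT} :=
  \bigcup_(i < s.-1) [set delta i a * (delta i.+1 (phi a))^-1 | a in A].

Definition amal_rel_group : {group powT} := <<amal_rels>>%G.

(* G' = H_1(K; Z), the abelianization of the chain of amalgamated products,
   i.e. (G_0 x ... x G_{s-1}) / <relations> *)
Definition Gprime (G : {set gT}) : {set coset_of amal_rel_group} :=
  coset amal_rel_group @* setXn (fun _ : 'I_s => G).

Definition iota (j : nat) (g : gT) : coset_of amal_rel_group :=
  coset amal_rel_group (delta j g).

Definition Psi (g : gT) := iota 0 g.

Definition Aprime : {set coset_of amal_rel_group} := iota s.-1 @: A.
Definition Bprime (B : {set gT}) : {set coset_of amal_rel_group} := iota 0 @: B.

(* phi'(a x (s-1)) = phi(a) x 0 ; value irrelevant outside A' *)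
Definition phiprime (x : coset_of amal_rel_group) : coset_of amal_rel_group :=
  match [pick a in A | iota s.-1 a == x] with
  | Some a => iota 0 (phi a)
  | None => 1
  end.
End Construction.

(* Main.v *)
Require Import Defs.
From HB Require Import structures.
From mathcomp Require Import all_boot all_fingroup all_solvable.
From mathcomp Require Import zify.
Local Open Scope group_scope.
Set Implicit Arguments. Unset Strict Implicit. Unset Printing Implicit Defensive.

Section Main.
Variables (gT : finGroupType) (G A B : {group gT}) (phi : {morphism A >-> gT}) (s : nat).
Hypothesis cG : abelian G.
Hypothesis sAG : A \subset G.
Hypothesis sBG : B \subset G.
Hypothesis injphi : 'injm phi.
Hypothesis phiAB : phi @* A = B.
Hypothesis s2 : (2 <= s)%N.

Lemma comG x y : x \in G -> y \in G -> commute x y.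
Proof. by move=> xG yG; apply: (centsP cG). Qed.

Lemma phiB a : a \in A -> phi a \in B.
Proof. by move=> aA; rewrite -phiAB mem_morphim. Qed.

Lemma AG a : a \in A -> a \in G. Proof. by move/(subsetP sAG). Qed.
Lemma BG a : a \in B -> a \in G. Proof. by move/(subsetP sBG). Qed.
Lemma phiG a : a \in A -> phi a \in G. Proof. by move/phiB/BG. Qed.

Definition getc (x : powT gT s) (i : nat) : gT :=
  if insub i is Some j then x j else 1.

Lemma getcM x y i : getc (x * y) i = getc x i * getc y i.
Proof. by rewrite /getc; case: insubP => [j _ _|_]; rewrite ?mulg_ffun ?mulg1. Qed.
Lemma getcV x i : getc (x^-1) i = (getc x i)^-1.
Proof. by rewrite /getc; case: insubP => [j _ _|_]; rewrite ?invg_ffun ?invg1. Qed.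
Lemma getc1 i : getc 1 i = 1.
Proof. by rewrite /getc; case: insubP => [j _ _|_]; rewrite ?oneg_ffun. Qed.
Lemma getc_delta k g i : (k < s)%N -> getc (delta s k g) i = if i == k then g else 1.
Proof.
move=> ks; rewrite /getc; case: insubP => [j _ <-|].
  by rewrite /delta ffunE.
by case: eqP => // ->; rewrite ks.
Qed.

Fixpoint cc (x : powT gT s) (i : nat) : gT :=
  if i is i'.+1 then getc x i * phi (cc x i') else getc x 0.

Definition GS : {set powT gT s} := [set x : powT gT s | [forall i, x i \in G]].

Lemma GS_group : group_set GS.
Proof.
apply/group_setP; split.
  by rewrite inE; apply/forallP=> i; rewrite oneg_ffun group1.
move=> x y; rewrite !inE => /forallP xG /forallP yG; apply/forallP=> i.
by rewrite mulg_ffun groupM.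
Qed.
Canonical GS_grp := Group GS_group.

Lemma getcG x i : x \in GS -> getc x i \in G.
Proof.
rewrite inE /getc => /forallP xG; case: insubP => [j _ _|_]; by rewrite ?group1.
Qed.

Lemma abGS : abelian GS.
Proof.
apply/centsP=> x xG y yG; apply/ffunP=> i.
move: xG yG; rewrite !inE => /forallP xG /forallP yG.
by rewrite !mulg_ffun (comG (xG i) (yG i)).
Qed.

Lemma delta_GS k g : g \in G -> delta s k g \in GS.
Proof. by move=> gG; rewrite inE; apply/forallP=> i; rewrite ffunE; case: ifP. Qed.

Definition SS : {set powT gT s} :=
  [set x in GS | [forall i : 'I_s.-1, cc x i \in A] && (cc x s.-1 == 1)].

Lemma ccM x y i : x \in GS -> y \in GS -> (i <= s.-1)%N ->
  (forall j, (j < s.-1)%N -> cc x j \in A) -> (forall j, (j < s.-1)%N -> cc y j \in A) ->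
  cc (x * y) i = cc x i * cc y i.
Proof.
move=> xG yG + hx hy; elim: i => [|i IH] lis /=; first by rewrite getcM.
have ilt : (i < s.-1)%N by [].
have e1 := IH (ltnW ilt).
rewrite e1 getcM.
have cA := hx _ ilt; have cB := hy _ ilt.
rewrite morphM //.
rewrite -!mulgA; congr (_ * _); rewrite !mulgA; congr (_ * _).
exact: comG (getcG _ yG) (phiG cA).
Qed.

Lemma SS_group : group_set SS.
Proof.
have cc1 i : cc 1 i = 1.
  by elim: i => [|i IH] /=; rewrite getc1 // IH morph1 mulg1.
apply/group_setP; split.
  rewrite inE group1 cc1 eqxx andbT; apply/forallP=> i; by rewrite cc1 group1.
move=> x y /setIdP[xG /andP[/forallP hx /eqP ex]] /setIdP[yG /andP[/forallP hy /eqP ey]].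
have hx' j : (j < s.-1)%N -> cc x j \in A by move=> jl; exact: (hx (Ordinal jl)).
have hy' j : (j < s.-1)%N -> cc y j \in A by move=> jl; exact: (hy (Ordinal jl)).
apply/setIdP; split; first exact: groupM.
rewrite ccM // ex ey mulg1 eqxx andbT.
by apply/forallP=> i; rewrite ccM ?groupM // ltnW.
Qed.
Canonical SS_grp := Group SS_group.

Notation N := (amal_rel_group s A phi).

Lemma gen_SS i a : (i < s.-1)%N -> a \in A ->
  delta s i a * (delta s i.+1 (phi a))^-1 \in SS.
Proof.
move=> ils aA.
have is1 : (i < s)%N by apply: leq_trans ils (leq_pred s).
have is2 : (i.+1 < s)%N by move: ils s2; case: s => // n.
set x := _ * _.
have gx j : getc x j = (if j == i then a else 1) * (if j == i.+1 then phi a else 1)^-1.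
  by rewrite /x getcM getcV !getc_delta.
have ccx j : cc x j = if j == i then a else 1.
  elim: j => [|j IH] /=.
    rewrite gx; case: (eqVneq 0 i) => [<-|_]; first by rewrite invg1 mulg1.
    by rewrite invg1 mulg1.
  rewrite gx IH; case: (eqVneq j i) => [->|nji].
    by rewrite eqxx (gtn_eqF (ltnSn i)) mul1g mulVg.
  rewrite morph1 mulg1 eqSS (negbTE nji) invg1 mulg1; by case: ifP.
apply/setIdP; split.
  by rewrite groupM ?groupV ?delta_GS ?phiG ?AG.
rewrite ccx (gtn_eqF ils) eqxx andbT; apply/forallP=> j; rewrite ccx.
by case: ifP.
Qed.

Lemma N_SS : N \subset SS.
Proof.
rewrite gen_subG; apply/bigcupsP=> i _; apply/subsetP=> x /imsetP[a aA ->].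
exact: gen_SS.
Qed.

Lemma SS_GS : SS \subset GS.
Proof. by apply/subsetP=> x /setIdP[]. Qed.

Lemma GS_norm : GS \subset 'N(N).
Proof. apply: sub_abelian_norm abGS _; exact: subset_trans N_SS SS_GS. Qed.

Lemma delta_norm j g : g \in G -> delta s j g \in 'N(N).
Proof. by move=> gG; apply: (subsetP GS_norm); exact: delta_GS. Qed.

Lemma es1 : s.-1 = (s.-2).+1.
Proof. by move: s2; case: s => [|[|n]]. Qed.

Lemma iter_defP i g : iter_defined A phi i g <-> (forall j, (j < i)%N -> iter j phi g \in A).
Proof.
elim: i g => [|i IH] g /=; first by split.
split.
  move=> /andP[gA /IH h] [|j] ji //.
  by rewrite iterSr h.
move=> h; rewrite (h 0%N) //=; apply/IH=> j ji; have := h j.+1 ji; by rewrite iterSr.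
Qed.

Lemma key_fwd a b : a \in G -> b \in G -> delta s s.-1 a * (delta s 0 b)^-1 \in SS ->
  (forall i, (i < s.-1)%N -> iter i phi b \in A) /\ a = iter s.-1 phi b.
Proof.
move=> aG bG /setIdP[_ /andP[/forallP hA /eqP hc]].
have hA' j : (j < s.-1)%N -> cc (delta s s.-1 a * (delta s 0 b)^-1) j \in A.
  by move=> jl; exact: (hA (Ordinal jl)).
set x := _ * _ in hA' hc.
have s1s : (s.-1 < s)%N by move: s2; case: s.
have s0 : (0 < s)%N by move: s2; case: s.
have s10 : (s.-1 != 0)%N by rewrite es1.
have gx j : getc x j = (if j == s.-1 then a else 1) * (if j == 0%N then b else 1)^-1.
  by rewrite /x getcM getcV !getc_delta.
have cl j : (j < s.-1)%N -> cc x j = (iter j phi b)^-1 /\ iter j phi b \in A.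
  elim: j => [|j IH] jl.
    have e : cc x 0 = b^-1 by rewrite /= gx eq_sym (negbTE s10) mul1g.
    by split; rewrite // -groupV -e hA'.
  have [e1 e2] := IH (ltnW jl).
  have e : cc x j.+1 = (iter j.+1 phi b)^-1.
    by rewrite /= e1 gx morphV // (ltn_eqF jl) /= invg1 mulg1 mul1g.
  by split; rewrite // -groupV -e hA'.
split; first by move=> i il; case: (cl i il).
move: hc; rewrite {1}es1 /= -es1 gx eqxx (negbTE s10) invg1 mulg1.
have sl : (s.-2 < s.-1)%N by rewrite es1.
have [e1 e2] := cl s.-2 sl.
by rewrite e1 morphV // es1 /= => /divg1_eq.
Qed.

Lemma gen_N i a : (i < s.-1)%N -> a \in A ->
  delta s i a * (delta s i.+1 (phi a))^-1 \in N.
Proof.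
move=> il aA; apply: mem_gen; apply/bigcupP; exists (Ordinal il) => //.
exact: imset_f.
Qed.

Lemma key_bwd b : (forall i, (i < s.-1)%N -> iter i phi b \in A) ->
  delta s 0 b * (delta s s.-1 (iter s.-1 phi b))^-1 \in N.
Proof.
move=> h.
suff: forall k, (k <= s.-1)%N -> delta s 0 b * (delta s k (iter k phi b))^-1 \in N by apply.
elim=> [|k IH] kl; first by rewrite mulgV group1.
have kl' : (k < s.-1)%N by [].
have := groupM (IH (ltnW kl)) (gen_N kl' (h _ kl')).
by rewrite -mulgA mulKg.
Qed.

Notation iot := (Defs.iota s A phi).

Lemma iota_eq j k x y : x \in G -> y \in G ->
  (iot j x = iot k y <-> delta s j x * (delta s k y)^-1 \in N).
Proof.
move=> xG yG; rewrite /Defs.iota -mem_rcoset; apply: rwP.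
exact: rcoset_kercosetP (delta_norm _ xG) (delta_norm _ yG).
Qed.

Lemma deltaM j (x y : gT) : delta s j (x * y) = delta s j x * delta s j y.
Proof. by apply/ffunP=> i; rewrite mulg_ffun !ffunE; case: ifP; rewrite ?mulg1. Qed.
Lemma deltaV j (x : gT) : delta s j (x^-1) = (delta s j x)^-1.
Proof. by apply/ffunP=> i; rewrite invg_ffun !ffunE; case: ifP; rewrite ?invg1. Qed.
Lemma delta1 j : delta s j (1 : gT) = 1.
Proof. by apply/ffunP=> i; rewrite oneg_ffun !ffunE; case: ifP. Qed.

Lemma iter1 k : iter k phi 1 = 1.
Proof. by elim: k => //= k ->; rewrite morph1. Qed.

Lemma iter_inj k x y : (forall i, (i < k)%N -> iter i phi x \in A) ->
  (forall i, (i < k)%N -> iter i phi y \in A) -> iter k phi x = iter k phi y -> x = y.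
Proof.
elim: k => // k IH hx hy /= e.
apply: IH => [i il|i il|]; [exact: hx (ltnW il)|exact: hy (ltnW il)|].
by apply: (injmP injphi) e; [exact: hx|exact: hy].
Qed.

Lemma iter_Gs k b : b \in G -> (forall i, (i < k)%N -> iter i phi b \in A) -> iter k phi b \in G.
Proof. by case: k => // k bG h; rewrite /= phiG // h. Qed.

Lemma iota_key a b : a \in G -> b \in G ->
  (iot s.-1 a = iot 0 b <-> (forall i, (i < s.-1)%N -> iter i phi b \in A) /\ a = iter s.-1 phi b).
Proof.
move=> aG bG; split.
  by move/(iota_eq _ _ aG bG) => hN; apply: key_fwd => //; apply: (subsetP N_SS).
move=> [h ->]; apply/esym/(iota_eq _ _ bG); first exact: iter_Gs.
exact: key_bwd.
Qed.

Lemma deltaN0 g : g \in G -> delta s 0 g \in N -> g = 1.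
Proof.
move=> gG hN.
have e : delta s 0 g = delta s s.-1 1 * (delta s 0 g^-1)^-1 by rewrite delta1 mul1g deltaV invgK.
rewrite e in hN; have [h e1] := key_fwd (group1 _) (groupVr gG) (subsetP N_SS _ hN).
apply/eqP; rewrite -eq_invg1; apply/eqP; apply: (iter_inj h (k := s.-1)).
  by move=> i _; rewrite iter1.
by rewrite iter1.
Qed.

Lemma deltaNs g : g \in G -> delta s s.-1 g \in N -> g = 1.
Proof.
move=> gG hN.
have e : delta s s.-1 g = delta s s.-1 g * (delta s 0 1)^-1 by rewrite delta1 invg1 mulg1.
rewrite e in hN; have [h ->] := key_fwd gG (group1 _) (subsetP N_SS _ hN).
exact: iter1.
Qed.

Lemma iota_inj j : (j = 0 \/ j = s.-1)%N -> {in G &, injective (iot j)}.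
Proof.
move=> hj x y xG yG /(iota_eq _ _ xG yG); rewrite -deltaV -deltaM => hN.
apply: divg1_eq; have xyG : x * y^-1 \in G by rewrite groupM ?groupV.
by case: hj => ej; rewrite ej in hN; [apply: deltaN0|apply: deltaNs].
Qed.

Variable r : nat.
Hypothesis hr : forall s' : nat, (r < s')%N -> forall g, g \in G ->
     (in_core A B phi g <-> (forall i, (i < s')%N -> iter_defined A phi i g)).
Hypothesis rs : (r < s)%N.

Lemma core_AB g : in_core A B phi g -> g \in A /\ g \in B.
Proof. by move=> h; have := h 0%N; rewrite /= => /setIP. Qed.

Lemma core_iter g : in_core A B phi g -> forall i, iter i phi g \in A.
Proof.
move=> h i; have [gA _] := core_AB h.
have rl : (r < r + i + 2)%N by lia.
have il : (i.+1 < r + i + 2)%N by lia.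
have /iter_defP := (hr rl (AG gA)).1 h i.+1 il.
by apply.
Qed.

Lemma core_of g : g \in G -> (forall i, (i < s)%N -> iter i phi g \in A) -> in_core A B phi g.
Proof.
move=> gG h; have rl : (r < s.+1)%N by lia.
apply/(hr rl gG) => i il.
apply/iter_defP => j ji; apply: h; exact: leq_trans ji il.
Qed.

Lemma ss : s = (s.-1).+1.
Proof. by move: s2; case: s. Qed.

Lemma core_iota g : in_core A B phi g -> iot 0 g = iot s.-1 (iter s.-1 phi g).
Proof.
move=> h; have [gA _] := core_AB h; symmetry.
apply/iota_key; rewrite ?AG ?core_iter //.
by split=> // i _; apply: core_iter.
Qed.

Lemma core_ApBp b : in_core A B phi b -> iot 0 b \in Aprime s A phi :&: Bprime s A phi B.
Proof.
move=> h; have [bA bB] := core_AB h.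
apply/setIP; split; last exact: imset_f.
by rewrite core_iota //; apply: imset_f; apply: core_iter.
Qed.

Lemma ApBp_core x : x \in Aprime s A phi :&: Bprime s A phi B ->
  exists b, in_core A B phi b /\ x = iot 0 b.
Proof.
case/setIP=> /imsetP[a aA ->] /imsetP[b bB e].
have [h ea] := (iota_key (AG aA) (BG bB)).1 e.
exists b; split => //; apply: core_of; first exact: BG.
move=> i; rewrite ss ltnS leq_eqVlt => /orP[/eqP ->|]; first by rewrite -ea.
exact: h.
Qed.

Lemma phip_iota a : a \in A -> phiprime (iot s.-1 a) = iot 0 (phi a).
Proof.
move=> aA; rewrite /phiprime; case: pickP => [a' /andP[a'A /eqP e]|].
  by rewrite (iota_inj _ (AG a'A) (AG aA) e) //; right.
by move/(_ a); rewrite aA eqxx.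
Qed.

Lemma core_shift b : in_core A B phi b -> in_core A B phi (iter s phi b).
Proof.
move=> h; apply: core_of; first exact/AG/core_iter.
by move=> i _; rewrite -iterD; apply: core_iter.
Qed.

Lemma phip_core b : in_core A B phi b -> phiprime (iot 0 b) = iot 0 (iter s phi b).
Proof.
move=> h; rewrite core_iota // phip_iota ?core_iter //.
suff -> : iter s phi b = phi (iter s.-1 phi b) by [].
by rewrite {1}ss.
Qed.

Lemma coreH_eq k : coreH (Aprime s A phi) (Bprime s A phi B) (@phiprime gT s A phi) k
   = Aprime s A phi :&: Bprime s A phi B.
Proof.
set H := Aprime s A phi :&: Bprime s A phi B.
have mapH x : x \in H -> phiprime x \in H.
  case/ApBp_core=> b [hb ->]; rewrite phip_core //; exact/core_ApBp/core_shift.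
have injH : {in H &, injective (@phiprime gT s A phi)}.
  move=> x y /ApBp_core[b1 [h1 ->]] /ApBp_core[b2 [h2 ->]].
  rewrite !phip_core // => e; congr (iot 0 _).
  apply: (iter_inj (k := s)) => [i _|i _|]; try exact: core_iter.
  by apply: (iota_inj _ _ _ e); [left|exact/AG/core_iter|exact/AG/core_iter].
have imH : (@phiprime gT s A phi) @: H = H.
  apply/eqP; rewrite eqEcard (card_in_imset injH) leqnn andbT.
  by apply/subsetP => y /imsetP[x xH ->]; exact: mapH.
elim: k => [|k IH] //=.
rewrite IH imH -setIA setIid; apply/setIidPr; apply/subsetP=> x xH.
rewrite inE; apply/andP; split; [by case/setIP: xH | exact: mapH].
Qed.

Lemma main_sec :
  let Ap := Aprime s A phi in
  let Bp := Bprime s A phi B in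
  let phip := @phiprime gT s A phi in
  let Ps := Psi s A phi in
  (forall x, in_core Ap Bp phip x <-> x \in Ap :&: Bp) /\
  ({in G &, injective Ps} /\ {in G &, {morph Ps : x y / x * y}} /\
   (forall g, in_core A B phi g -> in_core Ap Bp phip (Ps g)) /\
   (forall y, in_core Ap Bp phip y -> exists g, in_core A B phi g /\ Ps g = y) /\
   (forall h, in_core A B phi h -> Ps (iter s phi h) = phip (Ps h))).
Proof.
move=> Ap Bp phip Ps.
have part1 x : in_core Ap Bp phip x <-> x \in Ap :&: Bp.
  split; first by move/(_ 0%N).
  by move=> xH k; rewrite /Ap /Bp /phip coreH_eq.
split=> //; split; first by apply: iota_inj; left.
split.
  by move=> x y xG yG; rewrite /Ps /Psi /Defs.iota deltaM coset_morphM // delta_norm.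
split; first by move=> g hg; apply/part1; exact: core_ApBp.
split; first by move=> y /part1/ApBp_core[b [hb ->]]; exists b.
by move=> h hh; rewrite /Ps /Psi /phip phip_core.
Qed.
End Main.

Theorem lemma5p8 (gT : finGroupType) (p : nat) (G A B : {group gT})
    (phi : {morphism A >-> gT}) (r s : nat) :
  prime p -> abelian G -> p.-group G ->
  A \subset G -> B \subset G -> 'injm phi -> phi @* A = B ->
  (1 <= r)%N ->
  (forall s' : nat, (r < s')%N -> forall g, g \in G ->
     (in_core A B phi g <-> (forall i, (i < s')%N -> iter_defined A phi i g))) ->
  (r < s)%N ->
  let Ap := Aprime s A phi in
  let Bp := Bprime s A phi B in
  let phip := @phiprime gT s A phi in
  let Ps := Psi s A phi in
  (* (1) *)
  (forall x, in_core Ap Bp phip x <-> x \in Ap :&: Bp) /\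
  (* (2) *)
  ({in G &, injective Ps} /\ {in G &, {morph Ps : x y / x * y}} /\
   (forall g, in_core A B phi g -> in_core Ap Bp phip (Ps g)) /\
   (forall y, in_core Ap Bp phip y -> exists g, in_core A B phi g /\ Ps g = y) /\
   (forall h, in_core A B phi h -> Ps (iter s phi h) = phip (Ps h))).
Proof.
move=> _ cG _ sAG sBG injphi phiAB r1 hr rs.
have s2 : (2 <= s)%N by lia.
exact: (@main_sec gT G A B phi s cG sAG sBG injphi phiAB s2 r hr rs).
Qed.
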